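(* Let $P,Q$ be probability measures on $\mathbb{R}^d$. For a probability measure $P$ define $\Lambda_P(v)=\log\int e^{v\cdot y}P(dy)\in(-\infty,\infty]$ and $I_P(x)=\sup_{v\in\mathbb{R}^d}\{v\cdot x-\Lambda_P(v)\}$ (and similarly $\Lambda_Q$, $I_Q$). Then for every $x\in\mathbb{R}^d$, $$\sup_{c>1}\Big\{\frac1cI_P(x)-\frac1{c-1}R_{c/(c-1)}(Q\|P)\Big\}\le I_Q(x)\le\inf_{0<c<1}\Big\{\frac1cI_P(x)+\frac1{1-c}R_{1/(1-c)}(P\|Q)\Big\},$$ with the convention $\infty-\infty=-\infty$ in the lower bound.
   Context: Rényi divergence: let $\nu$ be a $\sigma$-finite positive measure with $dP=p\,d\nu$, $dQ=q\,d\nu$. For $\alpha\in(0,1)$, $R_\alpha(Q\|P)=\frac{1}{\alpha(\alpha-1)}\log\int_{p>0}q^\alpha p^{1-\alpha}\,d\nu$; for $\alpha>1$, the same formula if $Q\ll P$ and $R_\alpha(Q\|P)=+\infty$ if $Q\not\ll P$. *)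

(* Defs.v *)
(* R^d is modelled as [d.-tuple R] with its canonical
   product (= Borel) sigma-algebra from measurable_structure.v. *)
From HB Require Import structures.
From mathcomp Require Import all_boot all_order all_algebra.
From mathcomp Require Import all_classical all_reals all_analysis.
Set Implicit Arguments. Unset Strict Implicit. Unset Printing Implicit Defensive.
Import Order.TTheory GRing.Theory Num.Theory.
Local Open Scope classical_set_scope.
Local Open Scope ring_scope.

Section Defs.
Context {R : realType} {d : nat}.
Notation Rd := (d.-tuple R).

Definition dotR (v y : Rd) : R := \sum_(i < d) tnth v i * tnth y i.

Definition logMGF (P : probability Rd R) (v : Rd) : \bar R :=
  lne (\int[P]_(y in [set: Rd]) (expR (dotR v y))%:E)%E.

Definition rate (P : probability Rd R) (x : Rd) : \bar R :=
  ereal_sup [set ((dotR v x)%:E - logMGF P v)%E | v in [set: Rd]].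

Definition is_density (nu : {measure set Rd -> \bar R}) (P : probability Rd R)
    (p : Rd -> R) : Prop :=
  [/\ measurable_fun [set: Rd] p, (forall y, 0 <= p y) &
      forall A, measurable A -> P A = (\int[nu]_(y in A) (p y)%:E)%E].

(* Renyi divergence R_alpha(Q||P) computed from densities q = dQ/dnu, p = dP/dnu,
   with the 1/(alpha(alpha-1)) normalisation of the paper; for alpha > 1 it is
   +oo unless Q << P.  (Only alpha in (0,1) u (1,oo) is meaningful.) *)
Definition renyi (nu : {measure set Rd -> \bar R}) (Q P : probability Rd R)
    (q p : Rd -> R) (a : R) : \bar R :=
  let val := (((a * (a - 1))^-1)%:E *
     lne (\int[nu]_(y in [set y | (0 < p y)%R]) ((q y) `^ a * (p y) `^ (1 - a))%R%:E))%E in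
  if (1 < a) then (if `[< (Q `<< P) >] then val else +oo%E) else val.

End Defs.

(* Main.v *)
Require Import Defs.
From HB Require Import structures.
From mathcomp Require Import all_boot all_order all_algebra.
From mathcomp Require Import all_classical all_reals all_analysis.
From mathcomp Require Import measurable_realfun.
From mathcomp Require Import ring lra.
Import Order.TTheory GRing.Theory Num.Theory.
Local Open Scope classical_set_scope.
Local Open Scope ring_scope.


Section Aux.
Context {R : realType} {d : nat}.
Notation Rd := (d.-tuple R).

Definition scl (c : R) (v : Rd) : Rd := [tuple c * tnth v i | i < d].

Lemma dotR_scl c v y : dotR (scl c v) y = c * dotR v y.
Proof.
rewrite /dotR big_distrr /=; apply: eq_bigr => i _.
by rewrite tnth_mktuple mulrA.
Qed.

Lemma measurable_dotR v : measurable_fun [set: Rd] (dotR v).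
Proof.
rewrite /dotR; apply: measurable_sum => i.
apply: measurable_funM => //; exact: measurable_tnth.
Qed.

Lemma measurable_expdot v : measurable_fun setT (fun y : Rd => (expR (dotR v y))%:E).
Proof.
apply/measurable_EFinP; apply: measurableT_comp => //; exact: measurable_dotR.
Qed.


Import HBNNSimple.
Local Open Scope ereal_scope.

Lemma cov (nu : {measure set Rd -> \bar R}) (P : probability Rd R) (p : Rd -> R)
  (hp : is_density nu P p) (f : Rd -> \bar R) E : (forall x, 0 <= f x) ->
    measurable E -> measurable_fun E f ->
  \int[nu]_(x in E) (f x * (p x)%:E) = \int[P]_(x in E) f x.
Proof.
case: hp => mp p0 hP.
move=> f0 mE mf; set g := fun x => (p x)%:E.
have mg : measurable_fun setT g by apply/measurable_EFinP.
have g0 : forall x, 0 <= g x by move=> x; rewrite /g lee_fin.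
pose h := nnsfun_approx mE mf.
have -> : \int[P]_(x in E) f x =
    lim (\int[P]_(x in E) (EFin \o h n) x @[n --> \oo]).
  have fE x : E x -> f x = lim ((EFin \o h n) x @[n --> \oo]).
    by move=> Ex; apply/esym/cvg_lim => //; exact: cvg_nnsfun_approx.
  under eq_integral => x /[!inE] /fE -> //.
  apply: monotone_convergence => //.
  - move=> n; apply/measurable_EFinP.
    by apply: (measurable_funS measurableT) => //; exact/measurable_funP.
  - by move=> n x Ex //=; rewrite lee_fin.
  - by move=> x Ex a b ab; rewrite lee_fin; exact/lefP/nd_nnsfun_approx.
have -> : \int[nu]_(x in E) (f \* g) x =
    lim (\int[nu]_(x in E) ((EFin \o h n) \* g) x @[n --> \oo]).
  have fg x : E x -> f x * g x = lim (((EFin \o h n) \* g) x @[n --> \oo]).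
    by move=> Ex; apply/esym/cvg_lim => //; apply: cvgeZr;
      [by []|exact: cvg_nnsfun_approx].
  under eq_integral => x /[!inE] /fg -> //.
  apply: monotone_convergence => [//| | |].
  - move=> n; apply/emeasurable_funM; apply/measurable_funTS.
      exact/measurable_EFinP.
    exact: mg.
  - by move=> n x Ex /=; rewrite mule_ge0 ?lee_fin.
  - by move=> x Ex a b ab/=; rewrite lee_wpmul2r ?lee_fin//; exact/lefP/nd_nnsfun_approx.
suff suf n : \int[nu]_(x in E) ((EFin \o h n) x * g x) =
    \int[P]_(x in E) (EFin \o h n) x.
  by under eq_fun do rewrite suf.
transitivity (\int[P]_(x in E)
   (\sum_(y \in range (h n)) (y * \1_(h n @^-1` [set y]) x)%:E)); last first.
  by apply: eq_integral => t tE; rewrite /= fimfunE -fsumEFin.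
have indich m r : measurable_fun E (fun x => (r * \1_(h m @^-1` [set r]) x)%:E).
  by apply: (measurable_comp measurableT) => //; exact: measurable_funM.
rewrite ge0_integral_fsum//; last by move=> m y Ey; exact: nnfun_muleindic_ge0.
transitivity (\int[nu]_(x in E) (\sum_(y \in range (h n))
    (y * \1_(h n @^-1` [set y]) x)%:E * g x)).
  under [RHS]eq_integral => x xE.
    rewrite -ge0_mule_fsuml => [|y]; last exact: nnfun_muleindic_ge0.
    rewrite fsumEFin // -(fimfunE _ x); over.
  by [].
rewrite ge0_integral_fsum//; last 2 first.
  - move=> y; apply: emeasurable_funM => //; apply: measurable_funTS.
    exact: mg.
  - by move=> m y Ey; rewrite mule_ge0 ?nnfun_muleindic_ge0.
apply: eq_fsbigr => r rhn.
under [RHS]eq_integral do rewrite EFinM.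
rewrite integralZl_indic_nnsfun => //.
under eq_integral do rewrite EFinM -muleA.
rewrite ge0_integralZl//.
- under eq_integral do rewrite muleC.
  rewrite (eq_integral (g \_ (h n @^-1` [set r]))); last first.
    by move=> x xE; rewrite epatch_indic.
  rewrite -integral_mkcondr integral_indic//.
  have mA : measurable (h n @^-1` [set r] `&` E) by apply: measurableI.
  congr (_ * _); rewrite setIC; symmetry; exact: (hP _ mA).
- apply: emeasurable_funM; first exact/measurable_EFinP.
  exact: measurable_funTS mg.
- by move=> t Et; rewrite mule_ge0 ?lee_fin.
- by move: rhn; rewrite inE => -[t _ <-]; rewrite lee_fin.
Qed.

Lemma mgf_gt0 (P : probability Rd R) v :
  0 < \int[P]_(y in [set: Rd]) (expR (dotR v y))%:E.
Proof.
rewrite lt_neqAle integral_ge0 ?andbT; last by move=> y _; rewrite lee_fin expR_ge0.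
apply/negP => /eqP/esym H.
have : \int[P]_(y in [set: Rd]) `|(expR (dotR v y))%:E| = 0.
  by rewrite -H; apply: eq_integral => y _; rewrite gee0_abs// lee_fin expR_ge0.
move/(ae_eq_integral_abs P measurableT (measurable_expdot v)).
rewrite /ae_eq => -[N [mN PN0 sub]].
have : P [set: Rd] <= P N.
  apply: le_measure; rewrite ?inE//.
  move=> y _; apply: sub => /=; move=> /(_ I) /eqP.
  by rewrite /cst eqe gt_eqF// expR_gt0.
by rewrite probability_setT PN0 lee_fin ler10.
Qed.

Lemma measurable_pos (f : Rd -> R) : measurable_fun setT f ->
  measurable [set y | (0 < f y)%R].
Proof.
move=> mf.
rewrite (_ : [set y | _] = setT `&` f @^-1` `]0%R, +oo[%classic); first exact: mf.
apply/seteqP; split=> y /=; rewrite in_itv /= andbT //.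
by case.
Qed.

Lemma dens_null (nu : {measure set Rd -> \bar R}) (P Q : probability Rd R) (q : Rd -> R)
  (hq : is_density nu Q q) : P `<< Q -> P (~` [set y | (0 < q y)%R]) = 0.
Proof.
case: hq => mq q0 hQ PQ.
have mS := @measurable_pos q mq.
have mC : measurable (~` [set y | (0 < q y)%R]) by exact: measurableC.
move/null_content_dominatesP : PQ; apply => //.
transitivity (\int[nu]_(y in ~` [set y | (0 < q y)%R]) (q y)%:E); first exact: hQ.
apply: integral0_eq => y /= /negP.
by rewrite -leNgt => qy; apply/eqP; rewrite eqe eq_le qy q0.
Qed.

Lemma key (nu : {measure set Rd -> \bar R}) (P Q : probability Rd R) (p q : Rd -> R)
  (hp : is_density nu P p) (hq : is_density nu Q q) (PQ : P `<< Q)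
  (c : R) (c0 : (0 < c)%R) (c1 : (c < 1)%R) (u : Rd) (m j : R) :
  \int[Q]_(y in [set: Rd]) (expR (dotR u y))%:E = m%:E ->
  \int[nu]_(y in [set y | (0 < q y)%R])
      ((p y) `^ ((1 - c)^-1) * (q y) `^ (1 - (1 - c)^-1))%:E = j%:E ->
  \int[P]_(y in [set: Rd]) (expR (dotR (scl c u) y))%:E <= (j `^ (1 - c) * m `^ c)%:E.
Proof.
move=> hm hj.
have hp' := hp; have hq' := hq.
case: hp' => mp p0 hP; case: hq' => mq q0 hQ.
set S := [set y | (0 < q y)%R].
have mS : measurable S := @measurable_pos q mq.
set a := ((1 - c)^-1)%R.
have a0 : (0 < a)%R by rewrite invr_gt0 subr_gt0.
have ainv : (a^-1 = 1 - c)%R by rewrite invrK.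
set e := fun y => expR (dotR (scl c u) y).
pose F := fun y => (p y * q y `^ (- c))%R.
pose G := fun y => (q y `^ c * e y)%R.
have mF : measurable_fun setT F.
  apply: measurable_funM => //; exact: measurableT_comp (measurable_powR _) mq.
have mG : measurable_fun setT G.
  apply: measurable_funM => //; first exact: measurableT_comp (measurable_powR _) mq.
  by apply: measurableT_comp => //; exact: measurable_dotR.
have ci0 : (0 < c^-1)%R by rewrite invr_gt0.
have H := hoelder nu mF mG a0 ci0.
rewrite ainv invrK subrK in H.
have {H} := H erefl.
have qS y : ~ S y -> q y = 0%R.
  by move=> yS; apply/eqP; rewrite eq_le q0 andbT leNgt; apply/negP => /= qy; apply: yS.
have H1 : \int[P]_(y in [set: Rd]) (e y)%:E = Lnorm nu 1 (EFin \o (F \* G)%R).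
  have mfe : measurable_fun setT (fun y => (e y)%:E).
    by apply/measurable_EFinP; apply: measurableT_comp => //; exact: measurable_dotR.
  rewrite (@ge0_negligible_integral _ _ _ P setT (~` S) (fun y => (e y)%:E)
     (measurableC mS) measurableT mfe); last 2 first.
  - by move=> y _; rewrite lee_fin expR_ge0.
  - exact: (@dens_null nu P Q q hq PQ).
  rewrite setTD setCK -(cov _ _ _ hp (fun y => (e y)%:E) S) //; last 2 first.
  - by move=> y; rewrite lee_fin expR_ge0.
  - exact: measurable_funTS mfe.
  rewrite Lnorm1 [LHS]integral_mkcond; apply: eq_integral => y _.
  rewrite patchE /F /G /=; case: ifPn => [/[1!inE] yS|/negP yS].
    have qc : (q y `^ c != 0)%R by rewrite gt_eqF ?powR_gt0.
    rewrite powRN -EFinM (_ : (p y / q y `^ c * (q y `^ c * e y) = e y * p y)%R).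
      by rewrite ger0_norm// mulr_ge0 ?expR_ge0.
    by field.
  have qy0 : q y = 0%R by apply: qS => Sy; apply: yS; rewrite inE.
  by rewrite qy0 powR0 ?oppr_eq0 ?gt_eqF// mulr0 mul0r normr0.
have ca : (- c * a = 1 - a)%R.
  by rewrite /a; field; rewrite subr_eq0 gt_eqF.
have a1 : (1 - a != 0)%R.
  by rewrite -ca mulf_neq0 ?oppr_eq0 ?gt_eqF.
have H2 : Lnorm nu a%:E (EFin \o F) = (j `^ (1 - c))%:E.
  have F0 y : (0 <= F y)%R by rewrite mulr_ge0 ?powR_ge0.
  have HF y : (`|F y| `^ a = p y `^ a * q y `^ (1 - a))%R.
    by rewrite ger0_norm// powRM ?powR_ge0// -powRrM ca.
  rewrite unlock /=.
  under eq_integral => y _ do rewrite HF.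
  rewrite (_ : \int[nu]_x _ = j%:E) ?poweR_EFin ?ainv//.
  rewrite -hj [RHS]integral_mkcond; apply: eq_integral => y _.
  rewrite patchE; case: ifPn => // /negP yS.
  have qy0 : q y = 0%R by apply: qS => Sy; apply: yS; rewrite inE.
  by rewrite qy0 powR0 ?mulr0.
have H3 : Lnorm nu (c^-1)%:E (EFin \o G) = (m `^ c)%:E.
  have G0 y : (0 <= G y)%R by rewrite mulr_ge0 ?powR_ge0 ?expR_ge0.
  have HG y : (G y `^ c^-1 = expR (dotR u y) * q y)%R.
    rewrite powRM ?powR_ge0 ?expR_ge0// -powRrM mulfV ?gt_eqF// powRr1//.
    by rewrite /e -expRM dotR_scl mulrAC mulfV ?gt_eqF// mul1r mulrC.
  rewrite unlock /=.
  under eq_integral => y _ do rewrite ger0_norm// HG EFinM.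
  rewrite (cov _ _ _ hq) ?hm ?invrK ?poweR_EFin//.
  exact: measurable_expdot.
by rewrite H1 EFinM -H2 -H3.
Qed.

Definition M (P : probability Rd R) v := \int[P]_(y in [set: Rd]) (expR (dotR v y))%:E.

Lemma M_cases (P : probability Rd R) v : M P v = +oo \/ exists2 m, (0 < m)%R & M P v = m%:E.
Proof.
have := mgf_gt0 P v; rewrite -/(M P v).
case: (M P v) => [m| |] //; last by left.
by move=> m0; right; exists m => //; rewrite -lte_fin.
Qed.

Lemma M0 P (x : Rd) : M P (scl 0 x) = 1.
Proof.
rewrite /M; under eq_integral do rewrite dotR_scl mul0r expR0.
by rewrite integral_cst// mul1e; exact: probability_setT.
Qed.

Lemma rate_lb P x w b : M P w = b%:E -> ((dotR w x - ln b)%:E <= rate P x).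
Proof.
move=> hb.
have b0 : (0 < b)%R by rewrite -lte_fin -hb mgf_gt0.
apply: ereal_sup_ubound; exists w => //.
by rewrite /logMGF -/(M P w) hb lne_EFin.
Qed.

Lemma rate_ge0 (P : probability Rd R) (x : Rd) : 0 <= rate P x.
Proof.
have := rate_lb P x _ 1 (M0 P x).
by rewrite dotR_scl mul0r ln1 subr0.
Qed.

Lemma upper (nu : {measure set Rd -> \bar R}) (P Q : probability Rd R) (p q : Rd -> R)
  (hp : is_density nu P p) (hq : is_density nu Q q) (x : Rd)
  (c : R) (c0 : (0 < c)%R) (c1 : (c < 1)%R) :
  rate Q x <= (c^-1)%:E * rate P x + ((1 - c)^-1)%:E * renyi nu P Q p q ((1 - c)^-1).
Proof.
set a := ((1 - c)^-1)%R.
have c10 : (0 < 1 - c)%R by rewrite subr_gt0.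
have a0 : (0 < a)%R by rewrite invr_gt0.
have a1 : (1 < a)%R by rewrite invf_gt1// ltrBlDr ltrDl.
have rP := rate_ge0 P x.
have Hinf : forall z, z = +oo -> rate Q x <= (c^-1)%:E * rate P x + a%:E * z.
  move=> z ->; rewrite gt0_muley ?lte_fin//.
  move: rP; case: (rate P x) => [r _|_|] //.
    by rewrite -EFinM addey ?leey.
  by rewrite gt0_muley ?lte_fin ?invr_gt0// addey ?leey.
rewrite /renyi a1.
case: asboolP => [PQ|_]; last exact: Hinf.
have : 0 <= \int[nu]_(y in [set y | (0 < q y)%R]) ((p y) `^ a * (q y) `^ (1 - a))%:E.
  by apply: integral_ge0 => y _; rewrite lee_fin mulr_ge0 ?powR_ge0.
case E: (\int[nu]_(y in [set y | (0 < q y)%R]) ((p y) `^ a * (q y) `^ (1 - a))%:E)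
  => [j| |] // j0.
  2: by apply: Hinf => /=; rewrite gt0_muley// lte_fin invr_gt0 mulr_gt0// subr_gt0.
rewrite lee_fin in j0.
apply: ge_ereal_sup => z [v _ <-].
case: (M_cases Q v) => [Mi|[m m0 Mm]].
  by rewrite /logMGF -/(M Q v) Mi /= addeNy leNye.
have K := @key nu P Q p q hp hq PQ c c0 c1 v m j Mm E.
case: (M_cases P (scl c v)) => [Mi'|[b b0 Mb]].
  by move: K; rewrite -/(M P (scl c v)) Mi' leNgt ltey.
have rb := rate_lb P x _ b Mb.
move: K; rewrite -/(M P (scl c v)) Mb lee_fin => K.
have jp : (0 < j)%R.
  rewrite lt_neqAle j0 andbT; apply/negP => /eqP j00.
  by move: K; rewrite -j00 powR0 ?mul0r ?lt_geF// gt_eqF.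
rewrite /logMGF -/(M Q v) Mm !lne_EFin//.
have Lb : (ln b <= (1 - c) * ln j + c * ln m)%R.
  rewrite -!ln_powR -lnM ?posrE ?powR_gt0// ler_ln ?posrE ?mulr_gt0 ?powR_gt0//.
apply: (@le_trans _ _ ((c^-1 * (dotR (scl c v) x - ln b) + a * ((a * (a - 1))^-1 * ln j))%:E)).
  rewrite lee_fin dotR_scl.
  rewrite (_ : (c^-1 * (c * dotR v x - ln b) + a * ((a * (a - 1))^-1 * ln j)
     = dotR v x - ln m + ((1 - c) * ln j + c * ln m - ln b) / c)%R).
    by rewrite lerDl divr_ge0 ?subr_ge0 // ltW.
  rewrite /a; field.
  by rewrite !gt_eqF.
rewrite EFinD; apply: leeD.
  by rewrite EFinM; apply: lee_wpmul2l => //; rewrite lee_fin invr_ge0 ltW.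
by rewrite !EFinM.
Qed.

Lemma lower (nu : {measure set Rd -> \bar R}) (P Q : probability Rd R) (p q : Rd -> R)
  (hp : is_density nu P p) (hq : is_density nu Q q) (x : Rd)
  (c : R) (c1 : (1 < c)%R) :
  (c^-1)%:E * rate P x - ((c - 1)^-1)%:E * renyi nu Q P q p (c / (c - 1)) <= rate Q x.
Proof.
have c0 : (0 < c)%R by apply: lt_trans c1.
have cm10 : (0 < c - 1)%R by rewrite subr_gt0.
set c' := (c^-1)%R.
have c'0 : (0 < c')%R by rewrite invr_gt0.
have c'1 : (c' < 1)%R by rewrite invf_lt1.
have ea : (c / (c - 1) = (1 - c')^-1)%R.
  by rewrite /c'; field; rewrite !gt_eqF.
have a1 : (1 < c / (c - 1))%R.
  by rewrite ea invf_gt1 ?subr_gt0// ltrBlDr ltrDl.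
have Hneg : forall z, z = +oo ->
    (c^-1)%:E * rate P x - ((c - 1)^-1)%:E * z <= rate Q x.
  move=> z ->; rewrite gt0_muley ?lte_fin ?invr_gt0//.
  by rewrite addeNy leNye.
rewrite /renyi a1.
case: asboolP => [QP|_]; last exact: Hneg.
have : 0 <= \int[nu]_(y in [set y | (0 < p y)%R])
    ((q y) `^ (c / (c - 1)) * (p y) `^ (1 - c / (c - 1)))%:E.
  by apply: integral_ge0 => y _; rewrite lee_fin mulr_ge0 ?powR_ge0.
case E: (\int[nu]_(y in [set y | (0 < p y)%R])
    ((q y) `^ (c / (c - 1)) * (p y) `^ (1 - c / (c - 1)))%:E) => [j| |] // j0.
  2: by apply: Hneg => /=; rewrite gt0_muley// lte_fin invr_gt0 mulr_gt0 ?subr_gt0// (lt_trans ltr01 a1).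
rewrite lee_fin in j0.
rewrite ea in E.
have jp : (0 < j)%R.
  have K0 := @key nu Q P q p hq hp QP c' c'0 c'1 (scl 0 x) 1 j (M0 P x) E.
  move: K0; rewrite -/(M Q _).
  rewrite (_ : M Q (scl c' (scl 0 x)) = 1); last first.
    rewrite /M; under eq_integral do rewrite !dotR_scl mul0r mulr0 expR0.
    by rewrite integral_cst// mul1e; exact: probability_setT.
  rewrite lt_neqAle j0 andbT; apply: contraTN => /eqP <-.
  rewrite powR0 ?mul0r ?lee_fin; first by rewrite -ltNge ltr01.
  by rewrite subr_eq0 gt_eqF.
rewrite lne_EFin// -!EFinM.
set K := ((c - 1)^-1 * ((c / (c - 1) * (c / (c - 1) - 1))^-1 * ln j))%R.
case EQ : (rate Q x) => [r| |]; last 2 first.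
- exact: leey.
- by move: (rate_ge0 Q x); rewrite EQ.
rewrite leeBlDr// -EFinD lee_pdivrMl//.
apply: ge_ereal_sup => z [w _ <-].
case: (M_cases P w) => [Mi|[m m0 Mm]].
  by rewrite /logMGF -/(M P w) Mi /= addeNy leNye.
have K1 := @key nu Q P q p hq hp QP c' c'0 c'1 w m j Mm E.
case: (M_cases Q (scl c' w)) => [Mi'|[b b0 Mb]].
  by move: K1; rewrite -/(M Q (scl c' w)) Mi' leNgt ltey.
have rb := rate_lb Q x _ b Mb.
rewrite EQ lee_fin dotR_scl in rb.
move: K1; rewrite -/(M Q (scl c' w)) Mb lee_fin => K1.
have Lb : (ln b <= (1 - c') * ln j + c' * ln m)%R.
  rewrite -!ln_powR -lnM ?posrE ?powR_gt0// ler_ln ?posrE ?mulr_gt0 ?powR_gt0//.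
rewrite /logMGF -/(M P w) Mm lne_EFin// -EFinB -EFinM lee_fin.
rewrite (_ : (c * (r + K) = dotR w x - ln m + (c * (r - (c' * dotR w x - ln b))
   + c * ((1 - c') * ln j + c' * ln m - ln b)))%R).
  by rewrite lerDl addr_ge0// mulr_ge0 ?subr_ge0// ltW.
rewrite /K /c'; field.
have -> : (c + -1 * (c - 1) = 1)%R by ring.
by rewrite oner_neq0 !gt_eqF.
Qed.

End Aux.

Theorem mainTheorem15 (R : realType) (d : nat) (P Q : probability (d.-tuple R) R)
  (nu : {measure set (d.-tuple R) -> \bar R}) (p q : d.-tuple R -> R) :
  sigma_finite [set: d.-tuple R] nu ->
  is_density nu P p -> is_density nu Q q ->
  forall x : d.-tuple R,
    (ereal_sup [set ((c^-1)%R%:E * rate P x - ((c - 1)^-1)%R%:E * renyi nu Q P q p (c / (c - 1))%R)%E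
                | c in [set c : R | (1 < c)%R]]
     <= rate Q x)%E /\
    (rate Q x <=
     ereal_inf [set ((c^-1)%R%:E * rate P x + ((1 - c)^-1)%R%:E * renyi nu P Q p q ((1 - c)^-1)%R)%E
                | c in [set c : R | (0 < c < 1)%R]])%E.
Proof.
move=> _ hp hq x; split.
- apply: ge_ereal_sup => z [c c1 <-].
  exact: (@lower R d nu P Q p q hp hq x c c1).
- apply: le_ereal_inf_tmp => z [c /andP[c0 c1] <-].
  exact: (@upper R d nu P Q p q hp hq x c c0 c1).
Qed.
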